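(* Let $\mathfrak g$ be a real almost abelian Lie algebra (i.e. $\mathfrak g$ has an abelian ideal of codimension one) and let $(J,\langle\cdot,\cdot\rangle)$ be a Hermitian structure on $\mathfrak g$. Then there exist a $J$-invariant abelian ideal $\mathfrak a$ of $\mathfrak g$ of codimension $2$, an orthonormal basis $\{f_1,f_2\}$ of $\mathfrak a^{\perp}$, a vector $v_0\in\mathfrak a$ and a number $\mu\in\mathbb R$ such that $[f_1,f_2]=\mu f_2+v_0$, the endomorphism $\operatorname{ad}_{f_1}|_{\mathfrak a}$ of $\mathfrak a$ commutes with $J|_{\mathfrak a}$, and $\operatorname{ad}_{f_2}|_{\mathfrak a}=0$.
   Context: A complex structure on a real Lie algebra $\mathfrak g$ is an endomorphism $J$ with $J^2=-\mathrm{Id}$ and vanishing Nijenhuis tensor $N_J(x,y)=[Jx,Jy]-[x,y]-J([Jx,y]+[x,Jy])$ for all $x,y\in\mathfrak g$. A Hermitian structure $(J,\langle\cdot,\cdot\rangle)$ consists of a complex structure $J$ and an inner product with $\langle Jx,Jy\rangle=\langle x,y\rangle$. *)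

(* Defs.v *)
(* A real Lie algebra of dimension n is modelled on the
   row-vector space 'rV[R]_n (R : realType) with a bracket [br]; linear
   endomorphisms are matrices acting on the right (x *m J); subspaces are
   matrices viewed through their row space (mxalgebra, %MS); an inner
   product is given by a symmetric positive definite Gram matrix. *)
From HB Require Import structures.
From mathcomp Require Import all_boot all_order all_algebra.
From mathcomp Require Import reals.
Set Implicit Arguments. Unset Strict Implicit. Unset Printing Implicit Defensive.
Import Order.TTheory GRing.Theory Num.Theory.
Local Open Scope ring_scope.

Section LieDefs.
Variables (R : realType) (n : nat).
Notation V := 'rV[R]_n.

(* Lie bracket: bilinear (left linear + alternating gives right linear),
   alternating, Jacobi identity. *)
Definition is_lie_bracket (br : V -> V -> V) : Prop :=
  [/\ (forall (a : R) (x y z : V), br (a *: x + y) z = a *: br x z + br y z),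
      (forall x : V, br x x = 0) &
      (forall x y z : V, br x (br y z) + br y (br z x) + br z (br x y) = 0)].

Definition is_ideal (br : V -> V -> V) (A : 'M[R]_n) : Prop :=
  forall x y : V, (y <= A)%MS -> (br x y <= A)%MS.

Definition is_abelian_sub (br : V -> V -> V) (A : 'M[R]_n) : Prop :=
  forall x y : V, (x <= A)%MS -> (y <= A)%MS -> br x y = 0.

Definition almost_abelian (br : V -> V -> V) : Prop :=
  exists A : 'M[R]_n, [/\ is_ideal br A, is_abelian_sub br A & (\rank A).+1 = n].

Definition nijenhuis (br : V -> V -> V) (J : 'M[R]_n) (x y : V) : V :=
  br (x *m J) (y *m J) - br x y - (br (x *m J) y + br x (y *m J)) *m J.

Definition complex_structure (br : V -> V -> V) (J : 'M[R]_n) : Prop :=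
  J *m J = - 1%:M /\ forall x y : V, nijenhuis br J x y = 0.

Definition ip (G : 'M[R]_n) (u v : V) : R := (u *m G *m v^T) 0 0.

Definition inner_product (G : 'M[R]_n) : Prop :=
  G^T = G /\ forall v : V, v != 0 -> 0 < ip G v v.

Definition hermitian_structure (br : V -> V -> V) (J G : 'M[R]_n) : Prop :=
  [/\ complex_structure br J, inner_product G &
      forall x y : V, ip G (x *m J) (y *m J) = ip G x y].

End LieDefs.

(* Main.v *)
Require Import Defs.
From HB Require Import structures.
From mathcomp Require Import all_boot all_order all_algebra.
From mathcomp Require Import reals.
From mathcomp Require Import lra zify.
Import Order.TTheory GRing.Theory Num.Theory.
Local Open Scope ring_scope.

Lemma nat_step (r u m : nat) : (u <= r)%N -> u != r -> (r <= m)%N -> u.+1 = m -> r = m.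
Proof. lia. Qed.

Lemma nat_step2 (x y z m : nat) : (y <= x)%N -> y != x -> (x <= z)%N -> (y + 2)%N = m -> z.+1 = m -> x == z.
Proof. lia. Qed.

Section Helpers.
Set Implicit Arguments. Unset Strict Implicit.
Variables (R : realType) (n : nat).
Implicit Types (G J : 'M[R]_n).

Lemma mxN00 (M : 'M[R]_(1,1)) : (- M) 0 0 = - M 0 0.
Proof. by rewrite mxE. Qed.

Lemma mulJJ J m (x : 'M[R]_(m, n)) : J *m J = - 1%:M -> x *m J *m J = - x.
Proof. by move=> HJ; rewrite -mulmxA HJ mulmxN mulmx1. Qed.

Lemma subNmx m p (x : 'M[R]_(m, n)) (A : 'M[R]_(p, n)) : (x <= A)%MS -> (- x <= A)%MS.
Proof. by move=> h; rewrite -scaleN1r; apply: scalemx_sub. Qed.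

Lemma subMJ J m p (x : 'M[R]_(m, n)) (U : 'M[R]_(p, n)) :
  J *m J = - 1%:M -> (x <= U *m J)%MS -> (x *m J <= U)%MS.
Proof.
move=> HJ /submxP [D ->]; rewrite mulmxA mulJJ //; apply: subNmx; exact: submxMl.
Qed.

Lemma subJM J m p (x : 'M[R]_(m, n)) (U : 'M[R]_(p, n)) :
  J *m J = - 1%:M -> (x *m J <= U)%MS -> (x <= U *m J)%MS.
Proof.
move=> HJ h; have -> : x = - (x *m J *m J) by rewrite mulJJ // opprK.
by apply: subNmx; apply: submxMr.
Qed.

Lemma ipZl G a (u v : 'rV[R]_n) : ip G (a *: u) v = a * ip G u v.
Proof. by rewrite /ip -!scalemxAl mxE. Qed.

Lemma ipZr G a (u v : 'rV[R]_n) : ip G u (a *: v) = a * ip G u v.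
Proof. by rewrite /ip linearZ /= -scalemxAr mxE. Qed.

Lemma ip_sym G (u v : 'rV[R]_n) : G^T = G -> ip G u v = ip G v u.
Proof.
move=> HG; rewrite /ip.
have E : (u *m G *m v^T)^T = v *m G *m u^T by rewrite !trmx_mul trmxK HG mulmxA.
by rewrite -E [RHS]mxE.
Qed.

Lemma ortho G m p (f : 'rV[R]_n) (M : 'M[R]_(m, n)) (v : 'M[R]_(p, n)) :
  G^T = G -> (f <= kermx (G *m M^T))%MS -> (v <= M)%MS -> v *m G *m f^T = 0.
Proof.
move=> HG; rewrite sub_kermx => /eqP Hf /submxP [D ->].
have E : M *m G *m f^T = 0.
  have := congr1 trmx Hf; rewrite !trmx_mul trmxK HG trmx0.
  by [].
by rewrite -!mulmxA (mulmxA M) E mulmx0.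
Qed.

Lemma JG_rel J G : (forall x y : 'rV[R]_n, ip G (x *m J) (y *m J) = ip G x y) ->
  J *m J = - 1%:M -> J *m G = - (G *m J^T).
Proof.
move=> HJG HJJ.
have HJGm : J *m G *m J^T = G.
  apply/matrixP => i j.
  have E (M : 'M[R]_n) : ((delta_mx 0 i : 'rV[R]_n) *m M *m (delta_mx 0 j : 'rV[R]_n)^T) 0 0 = M i j.
    rewrite trmx_delta; have r1 := rowE i M; have c1 := colE j (row i M).

    rewrite -r1 -c1 !mxE //.
  rewrite -(E (J *m G *m J^T)) -(E G).
  have := HJG (delta_mx 0 i : 'rV[R]_n) (delta_mx 0 j : 'rV[R]_n); rewrite /ip trmx_mul !mulmxA.
  by [].
rewrite -[in RHS]HJGm -mulmxA -trmx_mul HJJ linearN /= trmx1 mulmxN mulmx1 opprK.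
by [].
Qed.

Lemma ipJr J G (x y : 'rV[R]_n) : J *m G = - (G *m J^T) ->
  ip G x (y *m J) = - ip G (x *m J) y.
Proof.
move=> H; have H' : G *m J^T = - (J *m G) by rewrite H opprK.
rewrite /ip trmx_mul mulmxA -(mulmxA x G) H' mulmxN mulNmx mxN00.
by rewrite !mulmxA.
Qed.

End Helpers.

Theorem lemma3p1 (R : realType) (n : nat) (br : 'rV[R]_n -> 'rV[R]_n -> 'rV[R]_n)
    (J G : 'M[R]_n) :
  is_lie_bracket br -> almost_abelian br -> hermitian_structure br J G ->
  exists a : 'M[R]_n,
    [/\ is_ideal br a, is_abelian_sub br a, (a *m J <= a)%MS & (\rank a + 2)%N = n] /\
    exists (f1 f2 : 'rV[R]_n),
      [/\ ip G f1 f1 = 1, ip G f2 f2 = 1, ip G f1 f2 = 0 &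
          forall v : 'rV[R]_n, (v <= a)%MS -> ip G v f1 = 0 /\ ip G v f2 = 0] /\
      exists (v0 : 'rV[R]_n) (mu : R),
        [/\ (v0 <= a)%MS, br f1 f2 = mu *: f2 + v0,
            (forall v : 'rV[R]_n, (v <= a)%MS -> br f1 (v *m J) = br f1 v *m J) &
            (forall v : 'rV[R]_n, (v <= a)%MS -> br f2 v = 0)].
Proof.
move=> [Hlin Halt Hjac] [U [HUi HUa HUr]] [[HJJ HN] [HGs HGp] HJG].
have HJG2 := JG_rel HJG HJJ.
have {}HUr : (\rank U).+1 = n := HUr.
have Ult : (\rank U < n)%N by rewrite -[X in (_ < X)%N]HUr.
have ip0 (v : 'rV[R]_n) : ip G v v = 0 -> v = 0.
  move=> h; apply/eqP; apply: contraT => /HGp; by rewrite h ltxx.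
have nUJ : ~~ (U *m J <= U)%MS.
  apply/negP => sUJ.
  set K := kermx (G *m U^T).
  have rK : (1 <= \rank K)%N.
    rewrite /K mxrank_ker.
    rewrite subn_gt0; apply: leq_ltn_trans (mxrankM_maxr _ _) _.
    by rewrite mxrank_tr Ult.
  have KU0 (v : 'rV[R]_n) : (v <= K)%MS -> (v <= U)%MS -> v = 0.
    move=> vK vU; apply: ip0; rewrite /ip (ortho HGs vK vU) mxE.
    by [].
  have rK1 : (\rank K <= 1)%N.
    have := mxrank_sum_cap K U; have := rank_leq_col (K + U)%MS.
    have -> : (K :&: U)%MS = 0.
      apply/eqP; rewrite -nz_row_eq0; apply/eqP; apply: KU0.
        exact: submx_trans (nz_row_sub _) (capmxSl _ _).
      exact: submx_trans (nz_row_sub _) (capmxSr _ _).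
    rewrite mxrank0; lia.
  set w := nz_row K.
  have wK : (w <= K)%MS by exact: nz_row_sub.
  have w0 : w != 0.
    rewrite nz_row_eq0 -mxrank_eq0; apply/eqP => h; rewrite h in rK; lia.
  have wJK : (w *m J <= K)%MS.
    move/submxP: sUJ => [D HD].
    have E : J *m (G *m U^T) = - (G *m U^T *m D^T).
      by rewrite mulmxA HJG2 mulNmx -[G *m J^T *m U^T]mulmxA -trmx_mul HD trmx_mul mulmxA.
    move: wK; rewrite /K !sub_kermx => /eqP Hw.
    by rewrite -mulmxA E mulmxN mulmxA Hw mul0mx oppr0.
  have Kw : (K <= w)%MS.
    have rKe : \rank K = 1%N by apply/eqP; rewrite eqn_leq rK1 rK.
    have := (mxrank_leqif_eq wK).2; rewrite rank_rV w0 rKe /=.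
    by move=> /esym/andP [].
  move: (submx_trans wJK Kw) => /submxP [D HD].
  have HD' : w *m J = D 0 0 *: w by rewrite HD {1}[D]mx11_scalar mul_scalar_mx.
  have : (D 0 0 ^+ 2 + 1) *: w = 0.
    rewrite scalerDl scale1r expr2 -scalerA -HD' scalemxAl -HD'.
    by rewrite mulJJ // addNr.
  move/eqP; rewrite scaler_eq0 (negbTE w0) orbF.
  have : 0 < D 0 0 ^+ 2 + 1 by rewrite ltr_wpDl ?sqr_ge0.
  by move=> /lt0r_neq0 /negbTE ->.
have rUJ : \rank (U *m J) = \rank U.
  apply: mxrankMfree; rewrite row_free_unit.
  have h : J *m (- J) = 1%:M by rewrite mulmxN HJJ opprK.
  by case: (mulmx1_unit h).
have rS : \rank (U + U *m J)%MS = n.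
  have [le eq] := mxrank_leqif_sup (addsmxSl U (U *m J)).
  have ne : \rank U != \rank (U + U *m J)%MS.
    rewrite eq; apply: contra nUJ => h; exact: submx_trans (addsmxSr _ _) h.
  have := rank_leq_col (U + U *m J)%MS.
  move: le ne HUr; move: (\rank (U + U *m J)%MS) (\rank U) => r u; lia.
set a := (U :&: U *m J)%MS.
have ra : (\rank a + 2)%N = n.
  have := mxrank_sum_cap U (U *m J); rewrite -/a rS rUJ.
  move: HUr; move: (\rank a) (\rank U) => x y; lia.
have aU : (a <= U)%MS by exact: capmxSl.
have aUJ : (a <= U *m J)%MS by exact: capmxSr.
have aJ : (a *m J <= a)%MS.
  rewrite sub_capmx; apply/andP; split; first exact: subMJ.
  exact: submxMr.
have vaJ (v : 'rV[R]_n) : (v <= a)%MS -> (v *m J <= a)%MS.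
  move=> h; exact: submx_trans (submxMr J h) aJ.
set Ka := kermx (G *m a^T).
have rSa : (1 <= \rank (U :&: Ka))%N.
  have := mxrank_sum_cap U Ka; have := rank_leq_col (U + Ka)%MS.
  rewrite /Ka mxrank_ker.
  have := mxrankM_maxr G a^T; rewrite mxrank_tr.
  move: ra HUr.
  move: (\rank (U + kermx (G *m a^T))%MS) (\rank (U :&: kermx (G *m a^T))%MS)
        (\rank (G *m a^T)) (\rank a) (\rank U) => p q r s t; lia.
set f := nz_row (U :&: Ka)%MS.
have f0 : f != 0.
  rewrite nz_row_eq0 -mxrank_eq0; apply/eqP => h; rewrite h in rSa; lia.
have fU : (f <= U)%MS by exact: submx_trans (nz_row_sub _) (capmxSl _ _).
have fKa : (f <= Ka)%MS by exact: submx_trans (nz_row_sub _) (capmxSr _ _).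
have fpos := HGp _ f0.
set s := Num.sqrt (ip G f f).
have spos : 0 < s by rewrite sqrtr_gt0.
set f2 := s^-1 *: f.
have f2U : (f2 <= U)%MS by exact: scalemx_sub.
have f2Ka : (f2 <= Ka)%MS by exact: scalemx_sub.
have f2n : ip G f2 f2 = 1.
  rewrite ipZl ipZr mulrA -expr2 exprVn sqr_sqrtr ?ltW // mulVf //.
  by rewrite gt_eqF.
set f1 := f2 *m J.
have f1n : ip G f1 f1 = 1 by rewrite /f1 HJG.
have f12 : ip G f1 f2 = 0.
  have h : ip G f1 f2 = - ip G f1 f2.
    by rewrite {1}ip_sym // ipJr.
  lra.
have orth2 (v : 'rV[R]_n) : (v <= a)%MS -> ip G v f2 = 0.
  by move=> va; rewrite /ip (ortho HGs f2Ka va) mxE.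
have orth1 (v : 'rV[R]_n) : (v <= a)%MS -> ip G v f1 = 0.
  by move=> va; rewrite /f1 ipJr // orth2 ?oppr0 // vaJ.
have f2a : ~~ (f2 <= a)%MS.
  by apply/negP => /orth2; rewrite f2n; apply/eqP; rewrite oner_eq0.
have f1J : f1 *m J = - f2 by rewrite /f1 mulJJ.
have f1U : ~~ (f1 <= U)%MS.
  apply: contra f2a => h; rewrite sub_capmx f2U /=.
  rewrite -[f2]opprK; apply: subNmx; rewrite -f1J; exact: submxMr.
have full1 : row_full (U + f1)%MS.
  rewrite /row_full; apply/eqP.
  have [le eq] := mxrank_leqif_sup (addsmxSl U f1).
  have ne : \rank U != \rank (U + f1)%MS.
    rewrite eq; apply: contra f1U => h; exact: submx_trans (addsmxSr _ _) h.
  have := rank_leq_col (U + f1)%MS.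
  by move=> h; apply: nat_step le ne h HUr.
have dec (x : 'rV[R]_n) : exists c u, (u <= U)%MS /\ x = c *: f1 + u.
  have : (x <= U + f1)%MS by exact: submx_full.
  case/sub_addsmxP => [[D1 D2] /= ->].
  exists (D2 0 0), (D1 *m U); split; first exact: submxMl.
  by rewrite {1}[D2]mx11_scalar mul_scalar_mx addrC.
have key (y : 'rV[R]_n) : (y <= a)%MS -> br f1 y = - (br f1 (y *m J) *m J).
  move=> ya.
  have yU : (y <= U)%MS := submx_trans ya aU.
  have yJU : (y *m J <= U)%MS := submx_trans (vaJ _ ya) aU.
  have mf2U : (- f2 <= U)%MS by apply: subNmx.
  have := HN f1 y; rewrite /nijenhuis f1J (HUa _ _ mf2U yJU) (HUa _ _ mf2U yU).
  rewrite sub0r add0r => /eqP; rewrite -opprD oppr_eq0 addr_eq0 => /eqP.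
  by [].
have brA (y : 'rV[R]_n) : (y <= a)%MS -> (br f1 y <= a)%MS.
  move=> ya; rewrite sub_capmx; apply/andP; split; first by apply: HUi; exact: submx_trans ya aU.
  rewrite key //; apply: subNmx; apply: submxMr; apply: HUi.
  exact: submx_trans (vaJ _ ya) aU.
exists a; split.
  split=> //.
  - move=> x y ya; have [c [u [uU ->]]] := dec x.
    rewrite Hlin (HUa _ _ uU (submx_trans ya aU)) addr0.
    by apply: scalemx_sub; apply: brA.
  - move=> x y xa ya; exact: HUa (submx_trans xa aU) (submx_trans ya aU).
exists f1, f2; split.
  by split=> // v va; split; [apply: orth1 | apply: orth2].
have Ua : (U <= a + f2)%MS.
  have [le eq] := mxrank_leqif_sup (addsmxSl a f2).
  have ne : \rank a != \rank (a + f2)%MS.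
    rewrite eq; apply: contra f2a => h; exact: submx_trans (addsmxSr _ _) h.
  have sub : (a + f2 <= U)%MS by rewrite addsmx_sub aU f2U.
  have [le2 eq2] := mxrank_leqif_eq sub.
  have : (\rank (a + f2)%MS == \rank U).
    exact: nat_step2 le ne le2 ra HUr.
  by rewrite eq2 => /andP [].
have : (br f1 f2 <= a + f2)%MS by apply: submx_trans Ua; apply: HUi.
case/sub_addsmxP => [[D1 D2] /= E].
exists (D1 *m a), (D2 0 0); split.
- exact: submxMl.
- by rewrite E {1}[D2]mx11_scalar mul_scalar_mx addrC.
- move=> v va; rewrite (key v va) mulNmx mulJJ // opprK.
  congr (br f1 _); by rewrite mulJJ // opprK.
- move=> v va; exact: HUa f2U (submx_trans va aU).
Qed.
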